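(* Let $A$, $\Omega$ be finite nonempty sets. The set of environments $(u_S,u_R)\in[0,1]^{2|A||\Omega|}$ satisfying scant-indifferences has Lebesgue measure one.
   Context: $A=\{a_1,\dots,a_{|A|}\}$. An environment is a pair of functions $u_S,u_R:A\times\Omega\to[0,1]$, identified with a point of $[0,1]^{2|A||\Omega|}$. For $a\in A$ let $\mathbf u_S(a)=u_S(a,\cdot)\in\mathbb R^{|\Omega|}$ and $\mathbf u_R(a)=u_R(a,\cdot)\in\mathbb R^{|\Omega|}$. For each $i$, the expanded-indifference matrix $T^i$ has $|\Omega|$ columns and rows: $\mathbf u_S(a_j)-\mathbf u_S(a_i)$ for each $j\ne i$, then $\mathbf u_R(a_j)-\mathbf u_R(a_i)$ for each $j\ne i$, then the rows of the $|\Omega|\times|\Omega|$ identity matrix. A row-submatrix of $T^i$ is a matrix obtained by deleting some rows of $T^i$. The environment satisfies scant-indifferences if for each $i$, every row-submatrix of $T^i$ has full rank. *)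

(* Defs.v *)
From HB Require Import structures.
From mathcomp Require Import all_boot all_order all_algebra.
From mathcomp Require Import classical_sets reals ereal sequences.
Set Implicit Arguments. Unset Strict Implicit. Unset Printing Implicit Defensive.
Import Order.TTheory GRing.Theory Num.Theory.
Local Open Scope ring_scope.
Local Open Scope classical_set_scope.

Definition box (R : realType) (I : finType) (a b : I -> R) : set (I -> R) :=
  [set x | forall c, a c <= x c <= b c].
Definition box_vol (R : realType) (I : finType) (a b : I -> R) : R :=
  \prod_(c : I) Num.max 0 (b c - a c).
Definition lebesgue_null (R : realType) (I : finType) (E : set (I -> R)) : Prop :=
  forall eps : R, 0 < eps ->
    exists a b : nat -> I -> R,
      E `<=` \bigcup_k box (a k) (b k) /\
      (\sum_(0 <= k <oo) (box_vol (a k) (b k))%:E < eps%:E)%E.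

(* An environment (u_S, u_R) is a point of R^{(A x Omega) + (A x Omega)}:
   coordinate inl (a,w) is u_S(a,w), coordinate inr (a,w) is u_R(a,w). *)
Definition envT (A O : finType) := ((A * O) + (A * O))%type.
Definition uS (R : realType) (A O : finType) (x : envT A O -> R) a w := x (inl (a, w)).
Definition uR (R : realType) (A O : finType) (x : envT A O -> R) a w := x (inr (a, w)).

Definition env_cube (R : realType) (A O : finType) : set (envT A O -> R) :=
  [set x | forall c, 0 <= x c <= 1].

(* Row index type of the expanded-indifference matrix T^i:
   sender rows j <> i, receiver rows j <> i, identity rows indexed by Omega. *)
Definition rowT (A O : finType) (i : A) :=
  ({j : A | j != i} + {j : A | j != i} + O)%type.

Definition Tmat (R : realType) (A O : finType) (x : envT A O -> R) (i : A)
    (r : rowT O i) (w : O) : R :=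
  match r with
  | inl (inl j) => uS x (val j) w - uS x i w
  | inl (inr j) => uR x (val j) w - uR x i w
  | inr w' => (w' == w)%:R
  end.

Definition Tsub (R : realType) (A O : finType) (x : envT A O -> R) (i : A)
    (S : {set rowT O i}) : 'M[R]_(#|S|, #|O|) :=
  \matrix_(k < #|S|, l < #|O|) Tmat x (enum_val k) (enum_val l).

Definition scant_indifferences (R : realType) (A O : finType) (x : envT A O -> R) : Prop :=
  forall (i : A) (S : {set rowT O i}), \rank (Tsub x S) = minn #|S| #|O|.

(* Main.v *)
Require Import Defs.
From HB Require Import structures.
From mathcomp Require Import all_boot all_order all_algebra.
From mathcomp Require Import classical_sets reals ereal sequences.
From mathcomp Require Import boolp fingroup perm.
From mathcomp Require Import ring lra.
Import Order.TTheory GRing.Theory Num.Theory.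
Local Open Scope classical_set_scope.
Set Implicit Arguments. Unset Strict Implicit. Unset Printing Implicit Defensive.

Section Cover.
Local Open Scope ring_scope.
Variables (R : realType) (I : finType).

Definition cube (x : I -> R) : Prop := forall c, 0 <= x c <= 1.
Definition dist (x y : I -> R) : R := \sum_c `|x c - y c|.
Definition upd (x : I -> R) (c : I) (v : R) : I -> R :=
  fun c' => if c' == c then v else x c'.

Definition coverable (E : set (I -> R)) (e : R) : Prop :=
  exists (J : finType) (a b : J -> I -> R),
    (forall x, E x -> exists j, box (a j) (b j) x) /\
    \sum_j box_vol (a j) (b j) <= e.

Lemma box_vol_ge0 (a b : I -> R) : 0 <= box_vol a b.
Proof. by apply: prodr_ge0 => c _; rewrite le_max lexx. Qed.

Lemma coverable_sub (E F : set (I -> R)) e :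
  E `<=` F -> coverable F e -> coverable E e.
Proof.
move=> EF [J [a [b [cov le]]]]; exists J, a, b; split => // x Ex.
exact: cov (EF _ Ex).
Qed.

Lemma coverable_le (E : set (I -> R)) e e' :
  e <= e' -> coverable E e -> coverable E e'.
Proof.
move=> ee [J [a [b [cov le]]]]; exists J, a, b; split => //.
exact: le_trans ee.
Qed.

Lemma coverable_union (E F : set (I -> R)) e1 e2 :
  coverable E e1 -> coverable F e2 -> coverable (E `|` F) (e1 + e2).
Proof.
move=> [J1 [a1 [b1 [c1 l1]]]] [J2 [a2 [b2 [c2 l2]]]].
exists (J1 + J2)%type.
exists (fun j => match j with inl j => a1 j | inr j => a2 j end).
exists (fun j => match j with inl j => b1 j | inr j => b2 j end).
split.
  move=> x [Ex|Fx].
    by have [j hj] := c1 _ Ex; exists (inl j).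
  by have [j hj] := c2 _ Fx; exists (inr j).
rewrite big_sumType /=; exact: lerD.
Qed.

Lemma coverable0 e : 0 <= e -> coverable set0 e.
Proof.
move=> e0; exists void, (fun _ _ => 0), (fun _ _ => 0); split => //.
by rewrite big_pred0 // => -[].
Qed.

Definition gidx (N : nat) (t : R) : nat := minn (Num.truncn (t * N%:R)) N.-1.

Lemma gidx_lt N t : (0 < N)%N -> (gidx N t < N)%N.
Proof. by move=> N0; rewrite /gidx; apply: leq_ltn_trans (geq_minr _ _) _; rewrite prednK. Qed.

Lemma gidx_bnd N t : (0 < N)%N -> 0 <= t <= 1 ->
  (gidx N t)%:R / N%:R <= t <= (gidx N t).+1%:R / N%:R.
Proof.
move=> N0 /andP[t0 t1].
have Np : 0 < N%:R :> R by rewrite ltr0n.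
have s0 : 0 <= t * N%:R by rewrite mulr_ge0.
have /andP[h1 h2] := truncn_itv s0.
rewrite ler_pdivrMr // ler_pdivlMr //.
apply/andP; split.
  apply: le_trans h1; rewrite ler_nat /gidx; exact: geq_minl.
rewrite /gidx; case: (leqP (Num.truncn (t * N%:R)) N.-1) => h.
  exact: ltW.
rewrite prednK //.
by rewrite -{2}(mul1r N%:R); apply: ler_pM.
Qed.


Definition Kc (c : I) := {c' : I | c' != c}.
Definition cellP (c : I) (N : nat) (P : {ffun Kc c -> 'I_N}) (x : I -> R) :=
  forall k : Kc c, (P k)%:R / N%:R <= x (val k) <= (P k).+1%:R / N%:R.
Definition ycen (E : set (I -> R)) c N (P : {ffun Kc c -> 'I_N}) : R :=
  match pselect (exists y, E y /\ cellP P y) with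
  | left H => sval (cid H) c
  | right _ => 0 end.
Definition ba E c N r (P : {ffun Kc c -> 'I_N}) (c' : I) : R :=
  match @insub _ (fun c' => c' != c) (Kc c) c' with
  | Some k => (P k)%:R / N%:R
  | None => ycen E P - r end.
Definition bb E c N r (P : {ffun Kc c -> 'I_N}) (c' : I) : R :=
  match @insub _ (fun c' => c' != c) (Kc c) c' with
  | Some k => (P k).+1%:R / N%:R
  | None => ycen E P + r end.

Lemma vol_cell E c N r (P : {ffun Kc c -> 'I_N}) : 0 <= r ->
  box_vol (ba E r P) (bb E r P) = 2 * r * (N%:R^-1) ^+ (#|I|.-1).
Proof.
move=> r0; rewrite /box_vol (bigD1 c) //=.
rewrite /ba /bb insubF ?eqxx //.
have -> : Num.max 0 (ycen E P + r - (ycen E P - r)) = 2 * r.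
  have -> : ycen E P + r - (ycen E P - r) = 2 * r by ring.
  apply/max_idPr; lra.
congr (_ * _).
rewrite (eq_bigr (fun _ => N%:R^-1)); last first.
  move=> c' hc; rewrite insubT /=.
  rewrite -mulrBl -natrB // subSnn mul1r; apply/max_idPr.
  by rewrite invr_ge0.
by rewrite prodr_const cardC1.
Qed.

Lemma thick (E : set (I -> R)) (c : I) (L w : R) :
  0 <= L -> 0 <= w -> (forall x, E x -> cube x) ->
  (forall x y, E x -> E y -> `|x c - y c| <= L * dist x (upd y c (x c)) + w) ->
  forall e, 0 < e -> coverable E (2 * w + e).
Proof.
move=> L0 w0 Ec Hlip e e0.
set d : R := #|I|%:R.
have d0 : 0 <= d by rewrite ler0n.
pose N := (Num.truncn (2 * L * d / e)).+1.
have N0 : (0 < N)%N by [].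
have Np : 0 < N%:R :> R by rewrite ltr0n.
have hN : 2 * L * d / N%:R <= e.
  have := truncnS_gt (2 * L * d / e); rewrite -/N ltr_pdivrMr // => h.
  rewrite ler_pdivrMr //; apply: (le_trans (ltW h)); rewrite mulrC lexx //.
pose r := L * d / N%:R + w.
have r0 : 0 <= r by rewrite /r addr_ge0 // divr_ge0 // ?mulr_ge0 // ltW.
exists {ffun Kc c -> 'I_N}, (ba E r), (bb E r); split; last first.
  rewrite (eq_bigr (fun _ => 2 * r * (N%:R^-1) ^+ (#|I|.-1))); last first.
    by move=> P _; rewrite vol_cell.
  rewrite sumr_const card_ffun card_ord card_sig cardC1.
  rewrite -[X in X <= _]mulr_natr natrX -mulrA exprVn mulVf ?mulr1 ?expf_neq0 ?gt_eqF //.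
  rewrite /r; move: hN; lra.
move=> x Ex.
have cx := Ec _ Ex.
pose P : {ffun Kc c -> 'I_N} := [ffun k => Ordinal (gidx_lt (x (val k)) N0)].
have cPx : cellP P x by move=> k; rewrite ffunE /=; apply: gidx_bnd.
exists P => c'.
rewrite /ba /bb; case: insubP => [k kP kval | nc].
  by rewrite -kval; apply: cPx.
have -> : c' = c by apply/eqP; move: nc; rewrite negbK.
rewrite /ycen; case: pselect => [H|H]; last by exfalso; apply: H; exists x.
case: (cid H) => y [Ey cPy] /=.
rewrite -ler_distl.
apply: le_trans (Hlip _ _ Ex Ey) _.
rewrite /r lerD2r -mulrA; apply: ler_wpM2l => //.
have -> : d / N%:R = \sum_(c'' : I) N%:R^-1 by rewrite sumr_const mulr_natl.
apply: ler_sum => c'' _.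
rewrite /upd; case: eqP => [->|ne]; first by rewrite subrr normr0 invr_ge0 ltW.
have hk : c'' != c by apply/eqP.
have := cPx (Sub c'' hk); have := cPy (Sub c'' hk); rewrite /=.
set p := (P _); move=> /andP[y1 y2] /andP[x1 x2].
have hp : (p.+1)%:R / N%:R = p%:R / N%:R + 1 * N%:R^-1 :> R.
  by rewrite -mulrDl -natr1.
rewrite hp in y2 x2; rewrite mul1r in y2 x2 *.
rewrite ler_norml; apply/andP; split; lra.
Qed.


Definition bnd (f : (I -> R) -> R) :=
  exists M, 0 <= M /\ forall x, cube x -> `|f x| <= M.
Definition lip (f : (I -> R) -> R) :=
  exists L, 0 <= L /\ forall x y, cube x -> cube y -> `|f x - f y| <= L * dist x y.
Definition LB f := bnd f /\ lip f.
Definition thin (f : (I -> R) -> R) :=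
  forall eps, 0 < eps -> exists del, 0 < del /\
    coverable [set x | cube x /\ `|f x| < del] eps.

Lemma dist_ge0 x y : 0 <= dist x y.
Proof. by apply: sumr_ge0 => i _. Qed.

Lemma LB_ext f g : (forall x, f x = g x) -> LB f -> LB g.
Proof.
move=> fg [[M [M0 hM]] [L [L0 hL]]]; split.
  by exists M; split => // x cx; rewrite -fg; apply: hM.
by exists L; split => // x y cx cy; rewrite -!fg; apply: hL.
Qed.

Lemma LB_const k : LB (fun _ => k).
Proof.
split; first by exists `|k|; split => //.
by exists 0; split => // x y _ _; rewrite subrr normr0 mul0r.
Qed.

Lemma LB_coord c : LB (fun x => x c).
Proof.
split.
  exists 1; split => // x cx; have /andP[h1 h2] := cx c.
  by rewrite ger0_norm.
exists 1; split => // x y _ _; rewrite mul1r /dist (bigD1 c) //=.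
by rewrite lerDl; apply: sumr_ge0.
Qed.

Lemma LB_add f g : LB f -> LB g -> LB (fun x => f x + g x).
Proof.
move=> [[M1 [M10 hM1]] [L1 [L10 hL1]]] [[M2 [M20 hM2]] [L2 [L20 hL2]]]; split.
  exists (M1 + M2); split; first exact: addr_ge0.
  move=> x cx; apply: le_trans (ler_normD _ _) _; by apply: lerD; [apply: hM1|apply: hM2].
exists (L1 + L2); split; first exact: addr_ge0.
move=> x y cx cy.
have -> : f x + g x - (f y + g y) = (f x - f y) + (g x - g y) by ring.
apply: le_trans (ler_normD _ _) _; rewrite mulrDl; by apply: lerD; [apply: hL1|apply: hL2].
Qed.

Lemma LB_opp f : LB f -> LB (fun x => - f x).
Proof.
move=> [[M1 [M10 hM1]] [L1 [L10 hL1]]]; split.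
  by exists M1; split => // x cx; rewrite normrN; apply: hM1.
exists L1; split => // x y cx cy.
by rewrite -opprD normrN; apply: hL1.
Qed.

Lemma LB_mul f g : LB f -> LB g -> LB (fun x => f x * g x).
Proof.
move=> [[M1 [M10 hM1]] [L1 [L10 hL1]]] [[M2 [M20 hM2]] [L2 [L20 hL2]]]; split.
  exists (M1 * M2); split; first exact: mulr_ge0.
  by move=> x cx; rewrite normrM; apply: ler_pM => //; [apply: hM1|apply: hM2].
exists (M1 * L2 + L1 * M2); split.
  by apply: addr_ge0; apply: mulr_ge0.
move=> x y cx cy.
have -> : f x * g x - f y * g y = f x * (g x - g y) + (f x - f y) * g y by ring.
apply: le_trans (ler_normD _ _) _; rewrite !normrM.
have -> : (M1 * L2 + L1 * M2) * dist x y = M1 * (L2 * dist x y) + (L1 * dist x y) * M2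
  by ring.
apply: lerD; apply: ler_pM => //; by [apply: hM1|apply: hL2|apply: hL1|apply: hM2].
Qed.

Lemma LB_sum (T : Type) (r : seq T) (P : pred T) (F : T -> (I -> R) -> R) :
  (forall i, LB (F i)) -> LB (fun x => \sum_(i <- r | P i) F i x).
Proof.
move=> hF; elim: r => [|a r IH].
  by apply: (LB_ext _ (LB_const 0)) => x; rewrite big_nil.
case Pa: (P a).
  apply: (LB_ext _ (LB_add (hF a) IH)) => x; by rewrite big_cons Pa.
by apply: (LB_ext _ IH) => x; rewrite big_cons Pa.
Qed.

Lemma LB_prod (T : Type) (r : seq T) (P : pred T) (F : T -> (I -> R) -> R) :
  (forall i, LB (F i)) -> LB (fun x => \prod_(i <- r | P i) F i x).
Proof.
move=> hF; elim: r => [|a r IH].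
  by apply: (LB_ext _ (LB_const 1)) => x; rewrite big_nil.
case Pa: (P a).
  apply: (LB_ext _ (LB_mul (hF a) IH)) => x; by rewrite big_cons Pa.
by apply: (LB_ext _ IH) => x; rewrite big_cons Pa.
Qed.

Lemma LB_det n (A : 'I_n -> 'I_n -> (I -> R) -> R) :
  (forall i j, LB (A i j)) -> LB (fun x => \det (\matrix_(i, j) A i j x)).
Proof.
move=> hA; apply: (LB_ext (f := fun x => \sum_(s : 'S_n)
   ((-1) ^+ s * \prod_i A i (s i) x))).
  by move=> x; rewrite /determinant; apply: eq_bigr => s _; congr (_ * _);
     apply: eq_bigr => i _; rewrite mxE.
apply: LB_sum => s; apply: LB_mul; first exact: LB_const.
by apply: LB_prod => i; apply: hA.
Qed.

Lemma cube_upd x c v : cube x -> 0 <= v <= 1 -> cube (upd x c v).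
Proof. by move=> cx hv c'; rewrite /upd; case: eqP. Qed.

Lemma thin_step (c : I) (f g : (I -> R) -> R) :
  LB f -> LB g -> thin g ->
  (forall x v, g (upd x c v) = g x) ->
  (forall x v, f (upd x c v) = f x + (v - x c) * g x) -> thin f.
Proof.
move=> Lf Lg tg gi fi eps e0.
pose h := fun x => f x - x c * g x.
have Lh : LB h by apply: LB_add => //; apply: LB_opp; apply: LB_mul => //; apply: LB_coord.
move: Lg Lh => [[Mg [Mg0 hMg]] [Lg [Lg0 hLg]]] [[Mh [Mh0 hMh]] [Lh [Lh0 hLh]]].
have [d1 [d10 cov1]] := tg (eps / 4) ltac:(by rewrite divr_gt0).
have d120 : 0 < d1 ^+ 2 by rewrite exprn_gt0.
pose del := eps * d1 ^+ 2 / (16 * (Mg + 1)).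
have Mg1 : 0 < Mg + 1 by rewrite ltr_pwDr.
have del0 : 0 < del by rewrite /del divr_gt0 // ?mulr_gt0.

exists del; split => //.
pose E2 := [set x | cube x /\ `|f x| < del /\ d1 <= `|g x|].
apply: (coverable_le (e := eps / 4 + (2 * (2 * (Mg + 1) * del / d1 ^+ 2) + eps / 4))).
  rewrite /del.
  have -> : 2 * (2 * (Mg + 1) * (eps * d1 ^+ 2 / (16 * (Mg + 1))) / d1 ^+ 2) = eps / 4.
    by field; rewrite !gt_eqF.
  lra.
apply: (coverable_sub (F := [set x | cube x /\ `|g x| < d1] `|` E2)).
  move=> x [cx fx]; case: (ltP `|g x| d1) => gx; first by left.
  by right.
apply: coverable_union => //.
pose Kn := Mg * Lh + Mh * Lg.
apply: (thick (c := c) (L := Kn / d1 ^+ 2)); last by rewrite divr_gt0.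
  by apply: divr_ge0; [apply: addr_ge0; apply: mulr_ge0|apply: ltW].
  by apply: divr_ge0; [apply: mulr_ge0; [apply: mulr_ge0; [done|exact: ltW]|exact: ltW]|apply: ltW].
  by move=> x [].
move=> x y [cx [fx gx]] [cy [fy gy]].
set y' := upd y c (x c).
have cy' : cube y' by apply: cube_upd.
have gy' : g y' = g y by apply: gi.
have fy' : f y' = f y + (x c - y c) * g y by rewrite /y' fi.
have y'c : y' c = x c by rewrite /y' /upd eqxx.
have hy' : h y' = h y by rewrite /h fy' gy' y'c; ring.
have H0 : g x * g y * (x c - y c) =
   g y * f x - g x * f y - (g y' * (h x - h y') + h y' * (g y' - g x)).
  rewrite gy' hy' /h; ring.
have H1 : `|g x * g y * (x c - y c)| <= 2 * Mg * del + Kn * dist x y'.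
  rewrite H0; apply: le_trans (ler_normB _ _) _.
  have -> : 2 * Mg * del + Kn * dist x y' =
     (Mg * del + Mg * del) + (Mg * (Lh * dist x y') + Mh * (Lg * dist x y'))
    by rewrite /Kn; ring.
  apply: lerD.
    apply: le_trans (ler_normB _ _) _; rewrite !normrM.
    apply: lerD; apply: ler_pM => //; by [apply: hMg|apply: ltW].
  apply: le_trans (ler_normD _ _) _; rewrite !normrM.
  apply: lerD; apply: ler_pM => //; by [apply: hMg|apply: hLh|apply: hMh|
     rewrite -normrN opprB; apply: hLg].
have H2 : d1 ^+ 2 * `|x c - y c| <= `|g x * g y * (x c - y c)|.
  rewrite !normrM expr2; apply: ler_pM => //; first by rewrite mulr_ge0 // ltW.
  by apply: ler_pM => //; apply: ltW.
have H3 : d1 ^+ 2 * `|x c - y c| <=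
    d1 ^+ 2 * (Kn / d1 ^+ 2 * dist x y' + 2 * (Mg + 1) * del / d1 ^+ 2).
  apply: le_trans H2 _; apply: le_trans H1 _.
  have -> : d1 ^+ 2 * (Kn / d1 ^+ 2 * dist x y' + 2 * (Mg + 1) * del / d1 ^+ 2)
     = Kn * dist x y' + 2 * (Mg + 1) * del by field; rewrite gt_eqF.
  have := ltW del0; lra.
by rewrite -(ler_pM2l d120).
Qed.


Definition small (E : set (I -> R)) := forall eps, 0 < eps -> coverable E eps.

Lemma thin_small f : thin f -> small [set x | cube x /\ f x = 0].
Proof.
move=> tf eps e0; have [del [del0 cov]] := tf eps e0.
apply: coverable_sub cov => x [cx fx]; split => //; by rewrite fx normr0.
Qed.

Lemma thin_const k : k != 0 -> thin (fun _ => k).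
Proof.
move=> k0 eps e0; exists `|k|; split; first by rewrite normr_gt0.
apply: (coverable_sub (F := set0)); last exact: coverable0 (ltW e0).
by move=> x [_]; rewrite ltxx.
Qed.

Lemma small_union E F : small E -> small F -> small (E `|` F).
Proof.
move=> sE sF eps e0.
have e2 : 0 < eps / 2 by rewrite divr_gt0.
apply: (coverable_le (e := eps / 2 + eps / 2)); first by lra.
by apply: coverable_union; [apply: sE|apply: sF].
Qed.

Lemma small_bigU (T : eqType) (s : seq T) (E : T -> set (I -> R)) :
  (forall t, small (E t)) -> small [set x | exists2 t, t \in s & E t x].
Proof.
move=> sE; elim: s => [|t s IH].
  move=> eps e0; apply: (coverable_sub (F := set0)); last exact: coverable0 (ltW e0).
  by move=> x [].
move=> eps e0; apply: (coverable_sub _ (small_union (sE t) IH e0)).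
move=> x [t' ]; rewrite inE => /orP[/eqP ->|ht] Ex; first by left.
by right; exists t'.
Qed.

Lemma small_null (i0 : I) E : small E -> lebesgue_null E.
Proof.
move=> sE eps e0.
have e2 : 0 < eps / 2 by rewrite divr_gt0.
have [J [a [b [cov le]]]] := sE _ e2.
pose s := [seq Some j | j <- enum J].
pose a' k := match nth None s k with Some j => a j | None => fun _ => 0 end.
pose b' k := match nth None s k with Some j => b j | None => fun _ => -1 end.
exists a', b'; split.
  move=> x Ex; have [j hj] := cov x Ex.
  exists (index j (enum J)) => //.
  have hs : (index j (enum J) < size (enum J))%N by rewrite index_mem mem_enum.
  by rewrite /a' /b' /s (nth_map j) // nth_index ?mem_enum.
pose G o := match o with Some j => box_vol (a j) (b j) | None => 0 end.
have hv : forall k, box_vol (a' k) (b' k) = G (nth None s k).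
  move=> k; rewrite /a' /b' /G; case: (nth None s k) => // .
  rewrite /box_vol (bigD1 i0) //= subr0.
  have -> : Num.max 0 (-1 : R) = 0 by apply/max_idPl; rewrite lerN10.
  by rewrite mul0r.
rewrite (nneseries_split 0 (size s)); last by move=> k _; rewrite lee_fin box_vol_ge0.
rewrite add0n eseries0 ?adde0; last first.
  move=> k hk _; rewrite hv nth_default //.
rewrite sumEFin lte_fin.
have -> : \sum_(0 <= k < size s) box_vol (a' k) (b' k) = \sum_j box_vol (a j) (b j).
  rewrite (eq_bigr (fun k => G (nth None s k))); last by move=> k _; rewrite hv.
  have h := big_nth None (r := s) xpredT G; rewrite /= in h.
  by rewrite -h big_map big_enum.
apply: le_lt_trans le _; lra.
Qed.


Definition Fm m (p q : 'I_m -> 'I_m -> I) (x : I -> R) : 'M[R]_m :=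
  \matrix_(a, b) (x (p a b) - x (q a b)).

Lemma LB_Fm m (p q : 'I_m -> 'I_m -> I) : LB (fun x => \det (Fm p q x)).
Proof.
apply: (LB_ext _ (LB_det (A := fun a b x => x (p a b) - x (q a b)) _)) => //.
by move=> a b; apply: LB_add; [apply: LB_coord|apply: LB_opp; apply: LB_coord].
Qed.

Lemma thin_family m (p q : 'I_m -> 'I_m -> I) :
  (forall a b a' b', p a b = p a' b' -> a = a' /\ b = b') ->
  (forall a b a' b', p a b != q a' b') ->
  thin (fun x => \det (Fm p q x)).
Proof.
elim: m p q => [|m IH] p q pinj pq.
  rewrite (_ : (fun x => _) = fun _ => 1); first exact: thin_const (oner_neq0 _).
  by apply: funext => x; rewrite det_mx00.
pose c := p 0 0.
pose p' (a b : 'I_m) := p (lift 0 a) (lift 0 b).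
pose q' (a b : 'I_m) := q (lift 0 a) (lift 0 b).
have hC : forall x, cofactor (Fm p q x) 0 0 = \det (Fm p' q' x).
  move=> x; rewrite /cofactor expr0 mul1r; congr (\det _).
  by apply/matrixP => a b; rewrite !mxE.
have pnc : forall a b : 'I_m.+1, (a, b) != (0, 0) -> p a b != c.
  move=> a b ne; apply/eqP => /pinj [ea eb]; by rewrite ea eb eqxx in ne.
have qnc : forall a b, q a b != c by move=> a b; rewrite eq_sym pq.
apply: (thin_step (c := c) (g := fun x => \det (Fm p' q' x))).
- exact: LB_Fm.
- exact: LB_Fm.
- apply: IH.
    by move=> a b a' b' /pinj [/lift_inj -> /lift_inj ->].
  by move=> *; apply: pq.
- move=> x v; congr (\det _); apply/matrixP => a b; rewrite !mxE /upd.
  rewrite (negbTE (qnc _ _)) (negbTE (pnc _ _ _)) //.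
- move=> x v; rewrite !(expand_det_row _ 0).
  have hcof : forall b, cofactor (Fm p q (upd x c v)) 0 b = cofactor (Fm p q x) 0 b.
    move=> b; rewrite /cofactor; congr (_ * \det _); apply/matrixP => a b'.
    rewrite !mxE /upd (negbTE (qnc _ _)) (negbTE (pnc _ _ _)) //.
  rewrite (bigD1 0) //= [in RHS](bigD1 0) //= hcof.
  have -> : \sum_(i < m.+1 | i != 0) Fm p q (upd x c v) 0 i * cofactor (Fm p q (upd x c v)) 0 i
        = \sum_(i < m.+1 | i != 0) Fm p q x 0 i * cofactor (Fm p q x) 0 i.
    apply: eq_bigr => b hb; rewrite hcof !mxE /upd (negbTE (qnc _ _)) (negbTE (pnc _ _ _)) //.
  rewrite hC !mxE /upd eqxx (negbTE (qnc _ _)) -/c; ring.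
Qed.

End Cover.

Section Conn.
Local Open Scope ring_scope.
Variables (R : realType) (A O : finType) (i : A) (S : {set rowT O i}).

Definition Drow := ({j : A | j != i} + {j : A | j != i})%type.
Definition WS : {set O} := [set w | inr w \in S].
Definition DS : {set Drow} := [set r | inl r \in S].
Definition mm := minn #|DS| #|~: WS|.
Definition rD (a : 'I_mm) : Drow := enum_val (widen_ord (geq_minl _ _) a).
Definition cD (b : 'I_mm) : O := enum_val (widen_ord (geq_minr _ _) b).
Definition rW (b : 'I_#|WS|) : O := enum_val b.
Definition pp (a b : 'I_mm) : envT A O :=
  match rD a with inl j => inl (val j, cD b) | inr j => inr (val j, cD b) end.
Definition qq (a b : 'I_mm) : envT A O :=
  match rD a with inl j => inl (i, cD b) | inr j => inr (i, cD b) end.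

Lemma rD_inj : injective rD.
Proof. by move=> a a' /enum_val_inj [e]; apply: ord_inj. Qed.
Lemma cD_inj : injective cD.
Proof. by move=> a a' /enum_val_inj [e]; apply: ord_inj. Qed.

Lemma pp_inj a b a' b' : pp a b = pp a' b' -> a = a' /\ b = b'.
Proof.
rewrite /pp; case ea: (rD a) => [j|j]; case ea': (rD a') => [j'|j'] //= [ej ec].
  split; last exact: cD_inj ec.
  by apply: rD_inj; rewrite ea ea'; congr inl; apply: val_inj.
split; last exact: cD_inj ec.
by apply: rD_inj; rewrite ea ea'; congr inr; apply: val_inj.
Qed.

Lemma pq_disj a b a' b' : pp a b != qq a' b'.
Proof.
rewrite /pp /qq; case: (rD a) => j; case: (rD a') => j' //=;
  apply/eqP => -[ej _]; by have := valP j; rewrite /= ej eqxx.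
Qed.

Lemma card_S : #|S| = (#|DS| + #|WS|)%N.
Proof.
rewrite -!sum1_card (big_sumType _ (fun s => s \in S)) /=.
by congr (_ + _)%N; apply: eq_bigl => r; rewrite inE.
Qed.

Lemma mm_min : (mm + #|WS|)%N = minn #|S| #|O|.
Proof. by rewrite /mm addn_minl card_S [(#|~: WS| + _)%N]addnC cardsC. Qed.

Definition rowS (a : 'I_(mm + #|WS|)) : rowT O i :=
  match split a with inl a => inl (rD a) | inr b => inr (rW b) end.
Definition colS (a : 'I_(mm + #|WS|)) : O :=
  match split a with inl a => cD a | inr b => rW b end.

Lemma rowS_in a : rowS a \in S.
Proof.
rewrite /rowS; case: split => b.
  by have := enum_valP (widen_ord (geq_minl #|DS| #|~: WS|) b); rewrite inE.
by have := enum_valP b; rewrite inE.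
Qed.

Lemma Tmat_p (x : envT A O -> R) a b : Tmat x (inl (rD a)) (cD b) = x (pp a b) - x (qq a b).
Proof. by rewrite /pp /qq; case: (rD a). Qed.

Lemma rank_good (x : envT A O -> R) : \det (Fm pp qq x) != 0 -> \rank (Tsub x S) = minn #|S| #|O|.
Proof.
move=> hdet; apply/eqP; rewrite eqn_leq leq_min rank_leq_row rank_leq_col /=.
case: (set_0Vmem S) => [S0|[s0 s0S]].
  by rewrite (_ : minn _ _ = 0%N) // S0 cards0 min0n.
pose rf (a : 'I_(mm + #|WS|)) := enum_rank_in s0S (rowS a).
pose cf (a : 'I_(mm + #|WS|)) := enum_rank (colS a).
pose N : 'M[R]_(mm + #|WS|) := mxsub rf cf (Tsub x S).
have hN : forall a b, N a b = Tmat x (rowS a) (colS b).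
  by move=> a b; rewrite !mxE enum_rankK_in ?rowS_in // enum_rankK.
have rN : (\rank N <= \rank (Tsub x S))%N.
  rewrite /N mxsubrc rowsubE; apply: leq_trans (mxrankM_maxr _ _) _.
  rewrite -[Tsub x S]mulmx1 -mulmx_colsub; rewrite [X in (_ <= \rank X)%N]mulmx1; exact: mxrankM_maxl.
rewrite -mm_min; apply: leq_trans rN.
have sl : forall a, split (lshift #|WS| a) = inl a := fun a => unsplitK (inl _).
have sr : forall a, split (rshift mm a) = inr a := fun a => unsplitK (inr _).
have eul : forall a b, ulsubmx N a b = N (lshift _ a) (lshift _ b) by move=> a b; rewrite !mxE.
have edl : forall a b, dlsubmx N a b = N (rshift _ a) (lshift _ b) by move=> a b; rewrite !mxE.
have edr : forall a b, drsubmx N a b = N (rshift _ a) (rshift _ b) by move=> a b; rewrite !mxE.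
have ul : ulsubmx N = Fm pp qq x.
  by apply/matrixP => a b; rewrite eul hN mxE /rowS /colS !sl Tmat_p.
have dl : dlsubmx N = 0.
  apply/matrixP => a b; rewrite edl hN mxE /rowS /colS sl sr /=.
  case: eqP => // e; have := enum_valP (widen_ord (geq_minr #|DS| #|~: WS|) b).
  by rewrite -/(cD b) -e inE; have := enum_valP a; rewrite /rW => ->.
have dr : drsubmx N = 1%:M.
  apply/matrixP => a b; rewrite edr hN mxE /rowS /colS !sr /=.
  by rewrite /rW (inj_eq enum_val_inj).
have uN : N \in unitmx.
  by rewrite unitmxE -(submxK N) dl dr det_ublock det1 mulr1 ul unitfE.
by rewrite -row_free_unit in uN; move/eqP: uN => ->.
Qed.

End Conn.

Unset Implicit Arguments. Set Strict Implicit.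

Theorem lemma2 (R : realType) (A O : finType) (hA : (0 < #|A|)%N) (hO : (0 < #|O|)%N) :
  lebesgue_null (@env_cube R A O `\` [set x | scant_indifferences x]).
Proof.
have [a0 _] := card_gt0P hA; have [w0 _] := card_gt0P hO.
apply: (small_null (inl (a0, w0))).
pose E (i : A) (S : {set rowT O i}) :=
  [set x : envT A O -> R | cube x /\ (\det (Fm (@pp A O i S) (@qq A O i S) x) = 0)%R].
pose F (i : A) := [set x | exists2 S, S \in enum {set rowT O i} & E i S x].
have sF : small [set x | exists2 i, i \in enum A & F i x].
  apply: small_bigU => i; apply: small_bigU => S.
  exact: thin_small (thin_family (@pp_inj _ _ _ S) (@pq_disj _ _ _ S)).
move=> eps e0; apply: (coverable_sub _ (sF eps e0)).
move=> x [cx nsc].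
apply: contrapT => hno; apply: nsc => i S.
apply: (rank_good (R := R)).
apply/eqP => h0; apply: hno; exists i; first by rewrite mem_enum.
by exists S; [rewrite mem_enum|split].
Qed.
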